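(* Let $T_1,T_2\in B(H)$ satisfy $\|T_1T_1^*+T_2T_2^*\|\le1$, and let $p(t)=\sum_{j=0}^Nc_jt^j$ be a polynomial in one complex variable. Then $$\|p(T_1)T_2\|\le\Big(\int_{\mathbb T}|p(t)|^2\,dm(t)\Big)^{1/2}=\Big(\sum_{j=0}^N|c_j|^2\Big)^{1/2},$$ where $m$ is normalized Lebesgue measure on the unit circle $\mathbb T$.
   Context: $H$ is a Hilbert space and $\|\cdot\|$ the operator norm on $B(H)$. *)

(* Defs.v *)
From HB Require Import structures.
From mathcomp Require Import all_boot all_order all_algebra.
From mathcomp Require Import all_classical all_reals all_analysis.
From mathcomp Require Import complex.
Set Implicit Arguments.
Unset Strict Implicit.
Unset Printing Implicit Defensive.
Import Order.TTheory GRing.Theory Num.Theory.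
Local Open Scope ring_scope.
Local Open Scope classical_set_scope.

Section Hilbert.
Variable R : realType.
Variable V : lmodType (complex R).
Variable ip : V -> V -> complex R.

Definition hnorm (x : V) : R := Num.sqrt (complex.Re (ip x x)).

Definition is_hilbert : Prop :=
  [/\ (forall (a : complex R) (x y z : V), ip (a *: x + y) z = a * ip x z + ip y z),
      (forall x y : V, ip y x = conjc (ip x y)),
      (forall x : V, complex.Im (ip x x) = 0 /\ 0 <= complex.Re (ip x x)),
      (forall x : V, ip x x = 0 -> x = 0)
    & (forall u : nat -> V,
         (forall e : R, 0 < e -> exists N : nat, forall m n : nat,
            (N <= m)%N -> (N <= n)%N -> hnorm (u m - u n) < e) ->
         exists l : V, forall e : R, 0 < e -> exists N : nat, forall n : nat,
            (N <= n)%N -> hnorm (u n - l) < e)].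

Definition bounded_op (T : V -> V) : Prop :=
  (forall (a : complex R) (x y : V), T (a *: x + y) = a *: T x + T y) /\
  exists M : R, forall x : V, hnorm (T x) <= M * hnorm x.

Definition is_adjoint (T S : V -> V) : Prop :=
  forall x y : V, ip (T x) y = ip x (S y).

Definition opnorm (T : V -> V) : R :=
  sup [set hnorm (T x) | x in [set x : V | hnorm x <= 1]].

Definition poly_op (p : {poly complex R}) (T : V -> V) : V -> V :=
  fun x => \sum_(j < size p) p`_j *: iter j T x.
End Hilbert.

Definition expi (R : realType) (t : R) : complex R := Complex (cos t) (sin t).

(* Main.v *)
Require Import Defs.
From HB Require Import structures.
From mathcomp Require Import all_boot all_order all_algebra.
From mathcomp Require Import all_classical all_reals all_analysis.
From mathcomp Require Import complex.
From mathcomp Require Import ring lra.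
Import Order.TTheory GRing.Theory Num.Theory.
Import numFieldNormedType.Exports.
Local Open Scope ring_scope.
Local Open Scope classical_set_scope.
Set Implicit Arguments.
Unset Strict Implicit.
Section D.
Variable R : realType.
Lemma dlin (d x : R) : is_derive x 1 (fun t : R => d * t) d.
Proof.
have := @is_deriveM R R (cst d) id x 1 0 1 _ _.
rewrite /= scaler0 addr0 /GRing.scale /= mulr1 => h; exact: h.
Qed.
Lemma dsin (d x : R) : is_derive x 1 (fun t : R => sin (d * t)) (cos (d * x) * d).
Proof.
have h1 : derivable (fun t : R => d * t) x 1 by case: (dlin d x).
have h2 : derivable (@sin R) (d * x) 1 by exact: derivable_sin.
apply: DeriveDef.
  apply/derivable1_diffP; apply: (@differentiable_comp _ _ _ _ (fun t : R => d * t) sin).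
    exact/derivable1_diffP.
  exact/derivable1_diffP.
have := derive1_comp h1 h2; rewrite /comp => h.
rewrite -derive1E h !derive1E (derive_val (is_derive:=dlin d x)).
by rewrite (derive_val (is_derive:=is_derive_sin (d * x))).
Qed.
Lemma dcos (d x : R) : is_derive x 1 (fun t : R => cos (d * t)) (- sin (d * x) * d).
Proof.
have h1 : derivable (fun t : R => d * t) x 1 by case: (dlin d x).
have h2 : derivable (@cos R) (d * x) 1 by exact: derivable_cos.
apply: DeriveDef.
  apply/derivable1_diffP; apply: (@differentiable_comp _ _ _ _ (fun t : R => d * t) cos).
    exact/derivable1_diffP.
  exact/derivable1_diffP.
have := derive1_comp h1 h2; rewrite /comp => h.
rewrite -derive1E h !derive1E (derive_val (is_derive:=dlin d x)).
by rewrite (derive_val (is_derive:=is_derive_cos (d * x))).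
Qed.

Lemma dcomb (al be d x : R) : is_derive x 1 (fun t : R => al * sin (d * t) + be * cos (d * t))
  (al * (cos (d * x) * d) + be * (- sin (d * x) * d)).
Proof.
have := is_deriveD (is_deriveZ al (dsin d x)) (is_deriveZ be (dcos d x)).
move=> h; exact: h.
Qed.

Lemma dsum n (g : 'I_n -> R -> R) (dg : 'I_n -> R) (x : R) :
  (forall i, is_derive x 1 (g i) (dg i)) ->
  is_derive x 1 (fun t => \sum_(i < n) g i t) (\sum_(i < n) dg i).
Proof. by move=> h; have := is_derive_sum h; rewrite fct_sumE. Qed.

Lemma setitv2 (a b:R) : [set` `[a,b]] = `[a,b].
Proof. by apply/seteqP; split => x /=; rewrite in_setE. Qed.

Lemma ftc_all (f F : R -> R) (a b : R) : a < b -> continuous f ->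
  (forall x : R, is_derive x 1 F (f x)) ->
  (\int[lebesgue_measure]_(x in `[a, b]) (f x)%:E = (F b - F a)%:E)%E.
Proof.
move=> ab cf dF; rewrite EFinB; apply: continuous_FTC2 => //.
- exact: continuous_subspaceT.
- have cF : forall x, {for x, continuous F}.
    move=> x; apply: differentiable_continuous; apply/derivable1_diffP; by case: (dF x).
  split.
  + by move=> x _; case: (dF x).
  + exact: cvg_at_right_filter (cF a).
  + exact: cvg_at_left_filter (cF b).
- by move=> x _; rewrite derive1E (derive_val (is_derive:=dF x)).
Qed.

Lemma normc_sq (z : complex R) : ComplexField.Normc.normc z ^+ 2 = complex.Re z ^+ 2 + complex.Im z ^+ 2.
Proof. by case: z => u v /=; rewrite sqr_sqrtr // addr_ge0 ?sqr_ge0. Qed.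

Lemma expiX (t : R) (j : nat) : expi t ^+ j = expi (j%:R * t).
Proof.
elim: j => [|j IH]; first by rewrite expr0 mul0r /expi sin0 cos0.
have -> : (j.+1)%:R = j%:R + 1 :> R by rewrite natr1.
rewrite exprSr IH /expi /= mulrDl mul1r cosD sinD.
apply/eqP; rewrite eq_complex /=; apply/andP; split; apply/eqP; ring.
Qed.

Variable p : {poly complex R}.
Local Notation n := (size p).
Definition ac (j : nat) := complex.Re p`_j.
Definition bc (j : nat) := complex.Im p`_j.
Definition Acf (j k : nat) := ac j * ac k + bc j * bc k.
Definition Bcf (j k : nat) := ac j * bc k - bc j * ac k.
Definition dd (j k : nat) : R := j%:R - k%:R.
Definition hh (j k : nat) (t : R) := Acf j k * cos (dd j k * t) + Bcf j k * sin (dd j k * t).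
Definition GG (j k : nat) (t : R) := if j == k then Acf j k * t
  else (Acf j k / dd j k) * sin (dd j k * t) + (- Bcf j k / dd j k) * cos (dd j k * t).

Lemma f_expand t : ComplexField.Normc.normc p.[expi t] ^+ 2
  = \sum_(j < n) \sum_(k < n) hh j k t.
Proof.
rewrite normc_sq horner_coef !raddf_sum /=.
rewrite !expr2 !mulr_suml -big_split /=; apply: eq_bigr => j _.
rewrite !mulr_sumr -big_split /=; apply: eq_bigr => k _.
rewrite !expiX /hh /dd /Acf /Bcf /ac /bc !mulrBl cosB sinB.
case: (p`_j) => a1 b1; case: (p`_k) => a2 b2 /=.
ring.
Qed.

Lemma GG_der (j k : nat) (x : R) : is_derive x 1 (GG j k) (hh j k x).
Proof.
rewrite /GG /hh; case: eqP => [e|ne].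
  rewrite e /dd subrr !mul0r cos0 sin0 mulr0 mulr1 addr0.
  have := dlin (Acf k k) x; move=> h; exact: h.
have dn : dd j k != 0 by rewrite /dd subr_eq0 eqr_nat; apply/eqP.
apply: (is_derive_eq (dcomb _ _ _ x)).
field; exact: dn.
Qed.

Lemma sin2pin (m : nat) : sin (m%:R * (2 * pi)) = 0 :> R.
Proof. by rewrite mulr_natl (mulr_natl pi 2) -[_ *+ m]add0r (periodicn (@sinD2pi R)) sin0. Qed.
Lemma cos2pin (m : nat) : cos (m%:R * (2 * pi)) = 1 :> R.
Proof. by rewrite mulr_natl (mulr_natl pi 2) -[_ *+ m]add0r (periodicn (@cosD2pi R)) cos0. Qed.

Lemma GG_diff j k : GG j k (2 * pi) - GG j k 0 = if j == k then Acf j k * (2 * pi) else 0.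
Proof.
rewrite /GG; case: eqP => [_|ne]; first by rewrite mulr0 subr0.
rewrite /dd !mulr0 sin0 cos0 !mulrBl sinB cosB !sin2pin !cos2pin; ring.
Qed.

Lemma hh_deriv (j k : nat) (x : R) : derivable (hh j k) x 1.
Proof.
have -> : hh j k = (fun t => Bcf j k * sin (dd j k * t) + Acf j k * cos (dd j k * t)).
  by apply/funext => t; rewrite /hh addrC.
by case: (dcomb (Bcf j k) (Acf j k) (dd j k) x).
Qed.

Theorem parseval : (((2 * pi)^-1)%R%:E *
    \int[lebesgue_measure]_(t in [set` `[0%R, (2 * pi)%R]])
        ((ComplexField.Normc.normc p.[expi t]) ^+ 2)%:E
   = (\sum_(j < size p) (ComplexField.Normc.normc p`_j) ^+ 2)%:E)%E.
Proof.
set F := fun t => \sum_(j < n) \sum_(k < n) GG j k t.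
have dF : forall x : R, is_derive x 1 F (\sum_(j < n) \sum_(k < n) hh j k x).
  move=> x; apply: dsum => j; apply: dsum => k; exact: GG_der.
have cf : continuous (fun t : R => \sum_(j < n) \sum_(k < n) hh j k t).
  move=> x; apply: differentiable_continuous; apply/derivable1_diffP.
  have h := dsum (fun j : 'I_n => dsum (fun k : 'I_n => derivableP (@hh_deriv j k x))).
  by case: h.
rewrite (_ : (fun t => _) = (fun t => (\sum_(j < n) \sum_(k < n) hh j k t)%:E)); last first.
  by apply/funext => t; rewrite f_expand.
have hab : (0:R) < 2 * pi by rewrite mulr_gt0 // pi_gt0.
have hI := ftc_all hab cf dF. cbv beta in hI. rewrite setitv2 hI.
rewrite /F -sumrB.
rewrite (eq_bigr (fun j : 'I_n => Acf j j * (2 * pi))); last first.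
  move=> j _; rewrite -sumrB (eq_bigr (fun k : 'I_n => if k == j then Acf j j * (2 * pi) else 0)).
    by rewrite -big_mkcond /= big_pred1_eq.
  move=> k _; rewrite GG_diff eq_sym.
  case: (k =P j) => [->|/eqP /negbTE ne]; first by rewrite eqxx.
  by move: ne; rewrite -val_eqE /= => ->.
rewrite -EFinM -mulr_suml mulrCA mulVf ?mulr1; last by rewrite mulf_neq0 // gt_eqF // pi_gt0.
congr (_%:E); apply: eq_bigr => j _; by rewrite normc_sq /Acf /ac /bc !expr2.
Qed.
End D.
Lemma cs_abs (R : realType) (A B C : R) : 0 <= A -> 0 <= B ->
  (forall a b : R, 0 <= a ^+ 2 * A - 2 * a * b * C + b ^+ 2 * B) ->
  C <= Num.sqrt A * Num.sqrt B.
Proof.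
move=> A0 B0 H.
have [C0|C0] := lerP C 0.
  by apply: le_trans C0 _; rewrite mulr_ge0 ?sqrtr_ge0.
have HC : C ^+ 2 <= A * B.
  have [A0'|Apos] := eqVneq A 0.
    have haC : (B + 1) / C * C = B + 1 by rewrite mulfVK ?gt_eqF.
    have := H ((B + 1) / C) 1; rewrite A0'; nra.
  have Ap : 0 < A by rewrite lt_def Apos A0.
  have := H C A; nra.
rewrite -sqrtrM // -(ger0_norm (ltW C0)) -sqrtr_sqr ler_sqrt //; last first.
by rewrite mulr_ge0.
Qed.

Lemma dCS (R : realType) n (a b : 'I_n -> R) :
  \sum_(j < n) a j * b j <= Num.sqrt (\sum_(j < n) a j ^+ 2) * Num.sqrt (\sum_(j < n) b j ^+ 2).
Proof.
apply: cs_abs; [by apply: sumr_ge0 => j _; exact: sqr_ge0 | by apply: sumr_ge0 => j _; exact: sqr_ge0|].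
move=> al be.
have -> : al ^+ 2 * (\sum_(j < n) a j ^+ 2) - 2 * al * be * (\sum_(j < n) a j * b j)
   + be ^+ 2 * (\sum_(j < n) b j ^+ 2) = \sum_(j < n) (al * a j - be * b j) ^+ 2.
  rewrite !mulr_sumr -sumrB -big_split /=; apply: eq_bigr => j _; ring.
by apply: sumr_ge0 => j _; exact: sqr_ge0.
Qed.

Section IP.
Variable R : realType.
Variable V : lmodType (complex R).
Variable ip : V -> V -> complex R.
Hypothesis hH : is_hilbert ip.
Local Notation N := (hnorm ip).
Local Notation Re := complex.Re.
Local Notation Im := complex.Im.

Lemma ipL a x y z : ip (a *: x + y) z = a * ip x z + ip y z.
Proof. by case: hH. Qed.
Lemma ipS x y : ip y x = conjc (ip x y).
Proof. by case: hH. Qed.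
Lemma ipP x : Im (ip x x) = 0 /\ 0 <= Re (ip x x).
Proof. by case: hH. Qed.
Lemma ipDef x : ip x x = 0 -> x = 0.
Proof. by case: hH => _ _ _ h _; apply: h. Qed.

Lemma cjD (a b : complex R) : conjc (a + b) = conjc a + conjc b.
Proof. by case: a => ? ?; case: b => ? ? /=; rewrite opprD. Qed.
Lemma cjB (a b : complex R) : conjc (a - b) = conjc a - conjc b.
Proof. by case: a => ? ?; case: b => ? ? /=; rewrite opprD. Qed.
Lemma cjM (a b : complex R) : conjc (a * b) = conjc a * conjc b.
Proof. case: a => ? ?; case: b => ? ? /=; apply/eqP; rewrite eq_complex /=; apply/andP; split; apply/eqP; ring. Qed.
Lemma ipDl x y z : ip (x + y) z = ip x z + ip y z.
Proof. by rewrite -[x in LHS]scale1r ipL mul1r. Qed.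
Lemma ip0l z : ip 0 z = 0.
Proof. by have := ipDl 0 0 z; rewrite addr0 => /(congr1 (fun t => t - ip 0 z)); rewrite addrK subrr. Qed.
Lemma ipZl a x z : ip (a *: x) z = a * ip x z.
Proof. by rewrite -[a *: x]addr0 ipL ip0l addr0. Qed.
Lemma ipNl x z : ip (- x) z = - ip x z.
Proof. by rewrite -scaleN1r ipZl mulN1r. Qed.
Lemma ipBl x y z : ip (x - y) z = ip x z - ip y z.
Proof. by rewrite ipDl ipNl. Qed.
Lemma ipDr x y z : ip z (x + y) = ip z x + ip z y.
Proof. by rewrite ipS ipDl cjD -(ipS x z) -(ipS y z). Qed.
Lemma ipZr a x z : ip z (a *: x) = conjc a * ip z x.
Proof. by rewrite ipS ipZl cjM -(ipS x z). Qed.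
Lemma ipBr x y z : ip z (x - y) = ip z x - ip z y.
Proof. by rewrite ipS ipBl cjB -(ipS x z) -(ipS y z). Qed.
Lemma ip0r z : ip z 0 = 0.
Proof. by rewrite ipS ip0l conjc0. Qed.
Lemma ip_suml n (f : 'I_n -> V) z : ip (\sum_(j < n) f j) z = \sum_(j < n) ip (f j) z.
Proof. exact: (big_morph (fun x => ip x z) (fun x y => ipDl x y z) (ip0l z)). Qed.

Lemma Re_ipS x y : Re (ip y x) = Re (ip x y).
Proof. by rewrite ipS; case: (ip x y). Qed.

Lemma hnorm_ge0 x : 0 <= N x.
Proof. exact: sqrtr_ge0. Qed.
Lemma hnorm_sq x : N x ^+ 2 = Re (ip x x).
Proof. by rewrite /hnorm sqr_sqrtr //; case: (ipP x). Qed.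

Lemma hnorm_eq0 x : N x = 0 -> x = 0.
Proof.
move=> h; apply: ipDef; have h0 : Re (ip x x) = 0 by rewrite -hnorm_sq h expr0n.
have [hi _] := ipP x; move: h0 hi; case: (ip x x) => a b /= -> ->; done.
Qed.

Lemma hnorm0 : N 0 = 0.
Proof. by rewrite /hnorm ip0l /= sqrtr0. Qed.

Lemma ip_expand (a b : R) u v :
  Re (ip (Complex a 0 *: u - Complex b 0 *: v) (Complex a 0 *: u - Complex b 0 *: v))
  = a ^+ 2 * Re (ip u u) - 2 * a * b * Re (ip u v) + b ^+ 2 * Re (ip v v).
Proof.
rewrite !ipBl !ipBr !ipZl !ipZr (ipS v u).
case: (ip u u) => p1 q1; case: (ip v u) => p2 q2; case: (ip v v) => p3 q3.
rewrite !raddfB /=.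
ring.
Qed.

Lemma CS u v : Re (ip u v) <= N u * N v.
Proof.
apply: cs_abs; [by case: (ipP u) | by case: (ipP v) |] => a b.
rewrite -ip_expand; by case: (ipP (Complex a 0 *: u - Complex b 0 *: v)).
Qed.

Lemma sq_le (x y : R) : 0 <= x -> 0 <= y -> x ^+ 2 <= y ^+ 2 -> x <= y.
Proof. move=> *; nra. Qed.
Lemma sq_eq (x y : R) : 0 <= x -> 0 <= y -> x ^+ 2 = y ^+ 2 -> x = y.
Proof. move=> *; apply/eqP; rewrite eq_le; apply/andP; split; apply: sq_le; nra. Qed.

Lemma hnormD u v : N (u + v) <= N u + N v.
Proof.
apply: sq_le; rewrite ?addr_ge0 ?hnorm_ge0 //.
rewrite hnorm_sq ipDl !ipDr !raddfD /= Re_ipS (Re_ipS u v) -!hnorm_sq.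
have := CS u v; nra.
Qed.

Lemma hnormZ c x : N (c *: x) = ComplexField.Normc.normc c * N x.
Proof.
have hc : 0 <= ComplexField.Normc.normc c by case: c => a b; apply: sqrtr_ge0.
apply: sq_eq; [exact: hnorm_ge0 | exact: mulr_ge0 hc (hnorm_ge0 _) |].
rewrite exprMn !hnorm_sq ipZl ipZr.
have [hi _] := ipP x; move: hi.
clear hc; case: c => a b; case: (ip x x) => p q /= -> /=.
rewrite sqr_sqrtr; [ring | nra].
Qed.

Lemma ip_eq0 d : (forall w, ip w d = 0) -> d = 0.
Proof. by move=> h; apply: ipDef. Qed.


Section Op.
Variables T1 T2 T1s T2s : V -> V.
Hypotheses (hT1 : bounded_op ip T1) (hT2 : bounded_op ip T2)
  (hT1s : is_adjoint ip T1 T1s) (hT2s : is_adjoint ip T2 T2s).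

Lemma lin_add (T : V -> V) : bounded_op ip T -> forall x y, T (x + y) = T x + T y.
Proof. by case=> h _ x y; rewrite -[x in LHS]scale1r h scale1r. Qed.
Lemma lin0 (T : V -> V) : bounded_op ip T -> T 0 = 0.
Proof.
move=> hT; have := lin_add hT 0 0; rewrite addr0 => /(congr1 (fun t => t - T 0)).
by rewrite addrK subrr.
Qed.
Lemma lin_scale (T : V -> V) : bounded_op ip T -> forall a x, T (a *: x) = a *: T x.
Proof. by move=> hT a x; have h0 := lin0 hT; case: hT => h _; rewrite -[a *: x]addr0 h h0 addr0. Qed.

Lemma bound_pos (T : V -> V) : bounded_op ip T ->
  exists M, 0 <= M /\ forall x, N (T x) <= M * N x.
Proof.
case=> _ [M hM]; exists (Num.max M 0); split; first by rewrite le_max lexx orbT.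
move=> x; apply: le_trans (hM x) _; apply: ler_wpM2r; first exact: hnorm_ge0.
by rewrite le_max lexx.
Qed.

Lemma adj_lin (T Ts : V -> V) : bounded_op ip T -> is_adjoint ip T Ts ->
  forall a x y, Ts (a *: x + y) = a *: Ts x + Ts y.
Proof.
move=> hT hTs a x y; apply/eqP; rewrite -subr_eq0; apply/eqP; apply: ip_eq0 => w.
rewrite ipBr -hTs ipDr ipZr !hTs ipDr ipZr; exact: subrr.
Qed.

Lemma adj_bounded (T Ts : V -> V) : bounded_op ip T -> is_adjoint ip T Ts ->
  bounded_op ip Ts.
Proof.
move=> hT hTs; split; first exact: adj_lin hT hTs.
have [M [M0 hM]] := bound_pos hT; exists M => y.
have h2 : N (Ts y) ^+ 2 <= M * N (Ts y) * N y.
  rewrite hnorm_sq -hTs; apply: le_trans (CS _ _) _.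
  by apply: ler_wpM2r; [exact: hnorm_ge0 | exact: hM].
have := mulr_ge0 M0 (hnorm_ge0 y); set t := N (Ts y) in h2 *; set n := N y in h2 *; move=> hMn.
rewrite leNgt; apply/negP => ht.
have : t * (M * n) < t * t by rewrite ltr_pM2l //; apply: le_lt_trans hMn ht.
rewrite -expr2; nra.
Qed.

Lemma adj_iter (T Ts : V -> V) : is_adjoint ip T Ts ->
  forall j u v, ip (iter j T u) v = ip u (iter j Ts v).
Proof.
move=> hTs; elim=> [//|j IH] u v.
by rewrite iterS hTs IH -iterSr.
Qed.

Definition Aop x := T1 (T1s x) + T2 (T2s x).

Let hT1s' := adj_bounded hT1 hT1s.
Let hT2s' := adj_bounded hT2 hT2s.

Lemma Aop_lin a x : Aop (a *: x) = a *: Aop x.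
Proof.
by rewrite /Aop (lin_scale hT1s') (lin_scale hT2s') (lin_scale hT1) (lin_scale hT2) scalerDr.
Qed.

Lemma Aop_bounded : exists K, forall x, N (Aop x) <= K * N x.
Proof.
have [M1 [M10 h1]] := bound_pos hT1; have [M2 [M20 h2]] := bound_pos hT2.
have [M3 [M30 h3]] := bound_pos hT1s'; have [M4 [M40 h4]] := bound_pos hT2s'.
exists (M1 * M3 + M2 * M4) => x; apply: le_trans (hnormD _ _) _.
rewrite mulrDl; apply: lerD.
  by apply: le_trans (h1 _) _; rewrite -mulrA; apply: ler_wpM2l.
by apply: le_trans (h2 _) _; rewrite -mulrA; apply: ler_wpM2l.
Qed.

Hypothesis hnorm1 : opnorm ip Aop <= 1.

Lemma Aop_le w : N (Aop w) <= N w.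
Proof.
have [K hK] := Aop_bounded.
have [w0|wn0] := eqVneq (N w) 0.
  by rewrite (hnorm_eq0 w0) -[X in Aop X](scale0r 0) Aop_lin !scale0r hnorm0.
have wp : 0 < N w by rewrite lt_def wn0 hnorm_ge0.
pose x := (Complex (N w)^-1 0) *: w.
have nc : ComplexField.Normc.normc (Complex (N w)^-1 0) = (N w)^-1.
  rewrite /= expr0n addr0 sqrtr_sqr ger0_norm // invr_ge0; exact: ltW.
have hx : N x <= 1 by rewrite hnormZ nc mulVf.
have : N (Aop x) <= opnorm ip Aop.
  apply: ub_le_sup; last by exists x.
  exists (Num.max K 0) => _ [y hy <-]; apply: le_trans (hK y) _.
  apply: le_trans (_ : K * N y <= Num.max K 0 * N y) _.
    by apply: ler_wpM2r; [exact: hnorm_ge0 | rewrite le_max lexx].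
  by rewrite -[X in _ <= X]mulr1; apply: ler_wpM2l => //; rewrite le_max lexx orbT.
rewrite Aop_lin hnormZ nc => h.
have := le_trans h hnorm1.
by rewrite ler_pdivrMl // mulr1.
Qed.

Lemma key w : N (T1s w) ^+ 2 + N (T2s w) ^+ 2 <= N w ^+ 2.
Proof.
rewrite (hnorm_sq (T1s w)) (hnorm_sq (T2s w)) -hT1s -hT2s -raddfD -ipDl.
apply: le_trans (CS _ _) _; rewrite expr2; apply: ler_wpM2r; first exact: hnorm_ge0.
exact: Aop_le.
Qed.

Lemma tele n z : \sum_(j < n) N (T2s (iter j T1s z)) ^+ 2 + N (iter n T1s z) ^+ 2 <= N z ^+ 2.
Proof.
elim: n => [|n IH]; first by rewrite big_ord0 add0r.
apply: le_trans IH; rewrite big_ord_recr /= -addrA lerD2l addrC.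
exact: key.
Qed.

Lemma Re_poly_op p x z : Re (ip (poly_op p T1 (T2 x)) z)
  = \sum_(j < size p) Re (ip (p`_j *: x) (T2s (iter j T1s z))).
Proof.
rewrite /poly_op ip_suml raddf_sum; apply: eq_bigr => j _.
by rewrite !ipZl (adj_iter hT1s) hT2s.
Qed.

Lemma main_bound p x : N (poly_op p T1 (T2 x))
  <= Num.sqrt (\sum_(j < size p) (ComplexField.Normc.normc p`_j) ^+ 2) * N x.
Proof.
set z := poly_op p T1 (T2 x).
set S := \sum_(j < size p) _.
have e1 : N z ^+ 2 <= N x * (\sum_(j < size p) ComplexField.Normc.normc p`_j * N (T2s (iter j T1s z))).
  rewrite hnorm_sq Re_poly_op mulr_sumr; apply: ler_sum => j _.
  by apply: le_trans (CS _ _) _; rewrite hnormZ [_ * N x]mulrC -mulrA.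
have e2 : \sum_(j < size p) ComplexField.Normc.normc p`_j * N (T2s (iter j T1s z))
   <= Num.sqrt S * N z.
  apply: le_trans (dCS _ _) _; apply: ler_wpM2l; first exact: sqrtr_ge0.
  rewrite -(ger0_norm (hnorm_ge0 z)) -sqrtr_sqr ler_sqrt; last exact: sqr_ge0.
  apply: le_trans (tele (size p) z); rewrite lerDl; exact: sqr_ge0.
have hz := hnorm_ge0 z; have hx := hnorm_ge0 x; have hS : 0 <= Num.sqrt S by exact: sqrtr_ge0.
have e3 : N z ^+ 2 <= N x * (Num.sqrt S * N z).
  apply: le_trans e1 _; exact: ler_wpM2l.
rewrite leNgt; apply/negP => hlt.
have hzp : 0 < N z by apply: le_lt_trans hlt; exact: mulr_ge0.
have : N z * (Num.sqrt S * N x) < N z * N z by rewrite ltr_pM2l.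
rewrite -expr2; nra.
Qed.

End Op.
End IP.

Theorem mainTheorem19 (R : realType) (V : lmodType (complex R))
  (ip : V -> V -> complex R) (hH : is_hilbert ip)
  (T1 T2 T1s T2s : V -> V)
  (hT1 : bounded_op ip T1) (hT2 : bounded_op ip T2)
  (hT1s : is_adjoint ip T1 T1s) (hT2s : is_adjoint ip T2 T2s)
  (hnorm1 : opnorm ip (fun x => T1 (T1s x) + T2 (T2s x)) <= 1)
  (p : {poly complex R}) :
  let sumc := \sum_(j < size p) (ComplexField.Normc.normc p`_j) ^+ 2 in
  (((2 * pi)^-1)%R%:E *
    \int[lebesgue_measure]_(t in [set` `[0%R, (2 * pi)%R]])
        ((ComplexField.Normc.normc p.[expi t]) ^+ 2)%:E = sumc%:E)%E
  /\ opnorm ip (fun x => poly_op p T1 (T2 x)) <= Num.sqrt sumc.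
Proof.
move=> sumc; split; first exact: parseval.
apply: ge_sup.
  exists (hnorm ip (poly_op p T1 (T2 0))); exists 0 => //=.
  by rewrite (hnorm0 hH) ler01.
move=> _ [x hx <-].
apply: le_trans (main_bound hH hT1 hT2 hT1s hT2s hnorm1 p x) _.
rewrite -[X in _ <= X]mulr1; apply: ler_wpM2l => //; exact: sqrtr_ge0.
Qed.
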